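(* Fix $\alpha\ge1$, $c>0$. For $t\ge0$ let $\Lambda_t$ be the qubit Pauli channel $\Lambda_t[\rho]=\sum_{\mu=0}^3p_\mu(t)\sigma_\mu\rho\sigma_\mu$ ($\sigma_0=\mathbb 1$, $\sigma_{1,2,3}$ the Pauli matrices) with $p_0(t)=\tfrac14[1+e^{-2\alpha ct}(1+2e^{\alpha ct}\cosh^\alpha(ct))]$, $p_1(t)=p_2(t)=\tfrac14(1-e^{-2\alpha ct})$, $p_3(t)=\tfrac14[1+e^{-2\alpha ct}(1-2e^{\alpha ct}\cosh^\alpha(ct))]$ (the solution of $\dot\rho=\sum_i\gamma_i(t)(\sigma_i\rho\sigma_i-\rho)$ with $\gamma_1=\gamma_2=\alpha c/2$, $\gamma_3(t)=-\tfrac{\alpha c}{2}\tanh(ct)$). Each $\Lambda_t$ is invertible; for $0\le s\le t$ set $V_{t,s}=\Lambda_t\circ\Lambda_s^{-1}$ and $\Omega_{V_{t,s}}=2(V_{t,s}\otimes\mathrm{id})[|\Phi^+\rangle\langle\Phi^+|]$. Then, with $\lambda_\tau=e^{-c\tau}$ and $\Gamma_{t,s}=\lambda_{t-s}\cosh(ct)\,\mathrm{sech}(cs)$, $$\Omega_{V_{t,s}}=p_1P_{\Phi^+}+p_2P_{\Phi^-}+(1-p_1-p_2)P_{\Psi^+}^{T_B},\qquad p_1=\tfrac12(\lambda_{t-s}^{2\alpha}+\Gamma_{t,s}^\alpha),\ p_2=\tfrac12(1-\Gamma_{t,s}^\alpha),$$ where $p_1\ge0$, $p_2\ge0$, $p_1+p_2\le1$.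 Consequently $V_{t,s}[X]=p\,\mathcal E_1[X]+(1-p)\,\mathcal E_2[X^T]$ for some $p\in[0,1]$ and CPTP qubit maps $\mathcal E_1,\mathcal E_2$.
   Context: $|\Phi^\pm\rangle=(|00\rangle\pm|11\rangle)/\sqrt2$, $|\Psi^\pm\rangle=(|01\rangle\pm|10\rangle)/\sqrt2$, $P_\psi=2|\psi\rangle\langle\psi|$, and $T_B$ denotes partial transposition on the second qubit. *)

(* Defs.v *)
From Stdlib Require Import Reals.
Open Scope R_scope.

Record Cx := mkCx { re : R; im : R }.
Definition Cadd (a b : Cx) : Cx := mkCx (re a + re b) (im a + im b).
Definition Cmul (a b : Cx) : Cx :=
  mkCx (re a * re b - im a * im b) (re a * im b + im a * re b).
Definition Cconj (a : Cx) : Cx := mkCx (re a) (- im a).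
Definition RtoC (r : R) : Cx := mkCx r 0.
Definition C0 : Cx := RtoC 0.
Definition C1 : Cx := RtoC 1.
Definition Ci : Cx := mkCx 0 1.

Fixpoint csum (n : nat) (f : nat -> Cx) : Cx :=
  match n with O => C0 | S m => Cadd (csum m f) (f m) end.

(* ---------- matrices: entries with indices < n are meaningful ---------- *)
Definition Mat := nat -> nat -> Cx.
Definition Meq (n : nat) (A B : Mat) : Prop :=
  forall i j, (i < n)%nat -> (j < n)%nat -> A i j = B i j.
Definition madd (A B : Mat) : Mat := fun i j => Cadd (A i j) (B i j).
Definition mscale (a : Cx) (A : Mat) : Mat := fun i j => Cmul a (A i j).
Definition mmul (n : nat) (A B : Mat) : Mat :=
  fun i j => csum n (fun k => Cmul (A i k) (B k j)).
Definition mtr (n : nat) (A : Mat) : Cx := csum n (fun i => A i i).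
Definition transpose (A : Mat) : Mat := fun i j => A j i.

Definition quad (n : nat) (A : Mat) (v : nat -> Cx) : Cx :=
  csum n (fun i => csum n (fun j => Cmul (Cconj (v i)) (Cmul (A i j) (v j)))).
Definition psd (n : nat) (A : Mat) : Prop :=
  forall v : nat -> Cx, im (quad n A v) = 0 /\ 0 <= re (quad n A v).

Definition QMap := Mat -> Mat.

Definition qlinear (E : QMap) : Prop :=
  (forall X Y, Meq 2 X Y -> Meq 2 (E X) (E Y)) /\
  (forall a X Y, Meq 2 (E (madd (mscale a X) Y)) (madd (mscale a (E X)) (E Y))).

(* (id_n (x) E) applied to a 2n x 2n matrix Y; index 2k+a <-> (k,a) *)
Definition block (Y : Mat) (k l : nat) : Mat :=
  fun a b => Y (2 * k + a)%nat (2 * l + b)%nat.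
Definition ampl (E : QMap) (Y : Mat) : Mat :=
  fun i j => E (block Y (i / 2)%nat (j / 2)%nat) (i mod 2) (j mod 2).

Definition completely_positive (E : QMap) : Prop :=
  forall (n : nat) (Y : Mat), psd (2 * n) Y -> psd (2 * n) (ampl E Y).
Definition trace_preserving (E : QMap) : Prop :=
  forall X, mtr 2 (E X) = mtr 2 X.
Definition CPTP (E : QMap) : Prop :=
  qlinear E /\ completely_positive E /\ trace_preserving E.

Definition is_inverse (L Linv : QMap) : Prop :=
  (forall X, Meq 2 (L (Linv X)) X) /\ (forall X, Meq 2 (Linv (L X)) X).

Definition mat2 (a b c d : Cx) : Mat :=
  fun i j => match i, j with
             | O, O => a | O, S O => b | S O, O => c | S O, S O => d
             | _, _ => C0 end.
Definition sigma (mu : nat) : Mat :=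
  match mu with
  | O => mat2 C1 C0 C0 C1
  | S O => mat2 C0 C1 C1 C0
  | S (S O) => mat2 C0 (Cmul (RtoC (-1)) Ci) Ci C0
  | _ => mat2 C1 C0 C0 (RtoC (-1))
  end.
Definition conjP (mu : nat) (X : Mat) : Mat := mmul 2 (mmul 2 (sigma mu) X) (sigma mu).
Definition pauli_channel (p : nat -> R) : QMap :=
  fun X => madd (mscale (RtoC (p 0%nat)) (conjP 0 X))
          (madd (mscale (RtoC (p 1%nat)) (conjP 1 X))
          (madd (mscale (RtoC (p 2%nat)) (conjP 2 X))
                (mscale (RtoC (p 3%nat)) (conjP 3 X)))).

Definition pprob (alpha c t : R) (mu : nat) : R :=
  match mu with
  | O => / 4 * (1 + exp (- 2 * alpha * c * t) *
                     (1 + 2 * exp (alpha * c * t) * Rpower (cosh (c * t)) alpha))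
  | S O => / 4 * (1 - exp (- 2 * alpha * c * t))
  | S (S O) => / 4 * (1 - exp (- 2 * alpha * c * t))
  | _ => / 4 * (1 + exp (- 2 * alpha * c * t) *
                     (1 - 2 * exp (alpha * c * t) * Rpower (cosh (c * t)) alpha))
  end.
Definition Lambda (alpha c t : R) : QMap := pauli_channel (pprob alpha c t).

(* ---------- two-qubit objects; index 2a+i <-> |a i> ---------- *)
Definition eunit (i j : nat) : Mat :=
  fun a b => if andb (Nat.eqb a i) (Nat.eqb b j) then C1 else C0.
(* Omega_V = 2 (V (x) id)[|Phi+><Phi+|] = sum_{ij} V(E_ij) (x) E_ij *)
Definition choi (V : QMap) : Mat :=
  fun I J => V (eunit (I mod 2) (J mod 2)) (I / 2)%nat (J / 2)%nat.

Definition ket (a00 a01 a10 a11 : R) : nat -> Cx :=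
  fun I => match I with
           | O => RtoC a00 | S O => RtoC a01 | S (S O) => RtoC a10
           | S (S (S O)) => RtoC a11 | _ => C0 end.
Definition Phi_plus  := ket (/ sqrt 2) 0 0 (/ sqrt 2).
Definition Phi_minus := ket (/ sqrt 2) 0 0 (- / sqrt 2).
Definition Psi_plus  := ket 0 (/ sqrt 2) (/ sqrt 2) 0.
Definition Pproj (psi : nat -> Cx) : Mat :=
  fun I J => Cmul (RtoC 2) (Cmul (psi I) (Cconj (psi J))).
Definition PT_B (A : Mat) : Mat :=
  fun I J => A (2 * (I / 2) + J mod 2)%nat (2 * (J / 2) + I mod 2)%nat.

Definition lam (c tau : R) : R := exp (- c * tau).
Definition Gam (c t s : R) : R := lam c (t - s) * cosh (c * t) * / cosh (c * s).

(* Main.v *)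
Require Import Defs.
From Stdlib Require Import Reals Lra Lia FunctionalExtensionality.
Open Scope R_scope.


Lemma dm k a : (a < 2)%nat -> ((2*k+a)/2 = k /\ (2*k+a) mod 2 = a)%nat.
Proof. intros. split. symmetry; apply (Nat.div_unique _ _ _ a); lia.
symmetry; apply (Nat.mod_unique _ _ k); lia. Qed.

Lemma Cx_ext (a b : Cx) : re a = re b -> im a = im b -> a = b.
Proof. destruct a, b; simpl; intros; subst; reflexivity. Qed.
Ltac cx := apply Cx_ext; simpl; ring.

Lemma csum_ext n f g : (forall i, (i < n)%nat -> f i = g i) -> csum n f = csum n g.
Proof. induction n; simpl; intros; auto. rewrite IHn by (intros; apply H; lia).
rewrite H by lia; reflexivity. Qed.

Lemma csum_add n f g : csum n (fun i => Cadd (f i) (g i)) = Cadd (csum n f) (csum n g).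
Proof. induction n; simpl. cx. rewrite IHn. cx. Qed.

Lemma csum_scal n c f : Cmul c (csum n f) = csum n (fun i => Cmul c (f i)).
Proof. induction n; simpl. cx. rewrite <- IHn. cx. Qed.

Lemma csum_double n f : csum (2*n) f = csum n (fun k => Cadd (f (2*k+0)%nat) (f (2*k+1)%nat)).
Proof. induction n. reflexivity.
replace (2 * S n)%nat with (S (S (2*n))) by lia.
change (csum (S (S (2*n))) f) with (Cadd (Cadd (csum (2*n) f) (f (2*n)%nat)) (f (S (2*n)))).
change (csum (S n) ?g) with (Cadd (csum n g) (g n)). rewrite IHn.
replace (S (2*n)) with (2*n+1)%nat by lia. replace (2*n+0)%nat with (2*n)%nat by lia.
cx. Qed.

Definition gq (A : Mat) (v : nat -> Cx) i j := Cmul (Cconj (v i)) (Cmul (A i j) (v j)).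

Lemma quad_split n A v : quad (2*n) A v = csum n (fun k => csum n (fun l =>
  Cadd (Cadd (gq A v (2*k+0) (2*l+0)) (gq A v (2*k+0) (2*l+1)))
       (Cadd (gq A v (2*k+1) (2*l+0)) (gq A v (2*k+1) (2*l+1))))%nat).
Proof. unfold quad. change (fun i => csum (2*n) (fun j => Cmul (Cconj (v i)) (Cmul (A i j) (v j))))
  with (fun i => csum (2*n) (gq A v i)).
rewrite csum_double. apply csum_ext; intros k _. rewrite !csum_double. rewrite <- csum_add.
apply csum_ext; intros; cx. Qed.

Definition w (mu : nat) (v : nat -> Cx) : nat -> Cx := fun i =>
  csum 2 (fun a => Cmul (Defs.sigma mu (i mod 2) a) (v (2*(i/2)+a)%nat)).

Lemma w_eval mu v k c : (c < 2)%nat -> w mu v (2*k+c)%nat = csum 2 (fun a => Cmul (Defs.sigma mu c a) (v (2*k+a)%nat)).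
Proof. intros. unfold w. destruct (dm k c H) as [-> ->]. reflexivity. Qed.

Lemma ampl_eval E Y k l a b : (a < 2)%nat -> (b < 2)%nat ->
  ampl E Y (2*k+a)%nat (2*l+b)%nat = E (block Y k l) a b.
Proof. intros. unfold ampl. destruct (dm k a H) as [-> ->]. destruct (dm l b H0) as [-> ->]. reflexivity. Qed.

Lemma quad_pc n q Y v : quad (2*n) (ampl (pauli_channel q) Y) v =
  Cadd (Cmul (RtoC (q 0%nat)) (quad (2*n) Y (w 0 v)))
  (Cadd (Cmul (RtoC (q 1%nat)) (quad (2*n) Y (w 1 v)))
  (Cadd (Cmul (RtoC (q 2%nat)) (quad (2*n) Y (w 2 v)))
        (Cmul (RtoC (q 3%nat)) (quad (2*n) Y (w 3 v))))).
Proof. rewrite !quad_split. rewrite !csum_scal, <- !csum_add. apply csum_ext; intros k _.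
rewrite !csum_scal, <- !csum_add. apply csum_ext; intros l _.
unfold gq. rewrite !ampl_eval by lia. rewrite !w_eval by lia.
unfold pauli_channel, conjP, mmul, madd, mscale, block, Defs.sigma, mat2. simpl. cx. Qed.

Lemma pc_CP q : (forall mu, (mu < 4)%nat -> 0 <= q mu) -> completely_positive (pauli_channel q).
Proof. intros Hq n Y HY v. rewrite quad_pc.
destruct (HY (w 0 v)) as [a1 a2]. destruct (HY (w 1 v)) as [b1 b2].
destruct (HY (w 2 v)) as [c1 c2]. destruct (HY (w 3 v)) as [d1 d2].
pose proof (Hq 0%nat ltac:(lia)). pose proof (Hq 1%nat ltac:(lia)).
pose proof (Hq 2%nat ltac:(lia)). pose proof (Hq 3%nat ltac:(lia)).
cbn [re im Cadd Cmul RtoC]. rewrite a1, b1, c1, d1. split. ring. nra. Qed.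


Definition pf (E F : R) : nat -> R := fun mu => match mu with
  | O => /4 * (1 + E + F) | S O => /4 * (1 - E) | S (S O) => /4 * (1 - E)
  | _ => /4 * (1 + E - F) end.

Ltac cases2 := let i := fresh "i" in let j := fresh "j" in
  intros i j ? ?; destruct i as [|[|i]]; destruct j as [|[|j]]; try lia.
Ltac unf := unfold pauli_channel, conjP, mmul, madd, mscale, Defs.sigma, mat2, pf, transpose in *.



Lemma Meq_trans n A B C : Meq n A B -> Meq n B C -> Meq n A C.
Proof. intros H1 H2 i j Hi Hj. rewrite H1, H2; auto. Qed.

Definition lc (x : R) (a : Cx) (y : R) (b : Cx) : Cx := Cadd (Cmul (RtoC x) a) (Cmul (RtoC y) b).
Lemma pc00 q X : pauli_channel q X 0%nat 0%nat = lc (q 0%nat + q 3%nat) (X 0%nat 0%nat) (q 1%nat + q 2%nat) (X 1%nat 1%nat).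
Proof. unf; unfold lc; apply Cx_ext; simpl; ring. Qed.
Lemma pc11 q X : pauli_channel q X 1%nat 1%nat = lc (q 1%nat + q 2%nat) (X 0%nat 0%nat) (q 0%nat + q 3%nat) (X 1%nat 1%nat).
Proof. unf; unfold lc; apply Cx_ext; simpl; ring. Qed.
Lemma pc01 q X : pauli_channel q X 0%nat 1%nat = lc (q 0%nat - q 3%nat) (X 0%nat 1%nat) (q 1%nat - q 2%nat) (X 1%nat 0%nat).
Proof. unf; unfold lc; apply Cx_ext; simpl; ring. Qed.
Lemma pc10 q X : pauli_channel q X 1%nat 0%nat = lc (q 0%nat - q 3%nat) (X 1%nat 0%nat) (q 1%nat - q 2%nat) (X 0%nat 1%nat).
Proof. unf; unfold lc; apply Cx_ext; simpl; ring. Qed.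
Ltac pcr := rewrite ?pc00, ?pc01, ?pc10, ?pc11.

Lemma pc_Meq q X Y : Meq 2 X Y -> Meq 2 (pauli_channel q X) (pauli_channel q Y).
Proof. intros H. cases2; pcr;
  rewrite ?(H 0%nat 0%nat), ?(H 0%nat 1%nat), ?(H 1%nat 0%nat), ?(H 1%nat 1%nat) by lia; reflexivity. Qed.

Lemma pc_comp E F E' F' X : Meq 2 (pauli_channel (pf E F) (pauli_channel (pf E' F') X))
   (pauli_channel (pf (E*E') (F*F'/2)) X).
Proof. cases2; pcr; unfold lc, pf; apply Cx_ext; simpl; field. Qed.

Lemma pc_id X : Meq 2 (pauli_channel (pf 1 2) X) X.
Proof. cases2; pcr; unfold lc, pf; apply Cx_ext; simpl; field. Qed.

Lemma pc_inv E F : E <> 0 -> F <> 0 -> is_inverse (pauli_channel (pf E F)) (pauli_channel (pf (/E) (4/F))).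
Proof. intros. split; intros X.
- eapply Meq_trans. apply pc_comp. replace (E*/E) with 1 by (field; auto).
  replace (F*(4/F)/2) with 2 by (field; auto). apply pc_id.
- eapply Meq_trans. apply pc_comp. replace (/E*E) with 1 by (field; auto).
  replace (4/F*F/2) with 2 by (field; auto). apply pc_id. Qed.

Lemma pc_CPTP q : (forall mu, (mu < 4)%nat -> 0 <= q mu) -> q 0%nat + q 1%nat + q 2%nat + q 3%nat = 1 ->
  CPTP (pauli_channel q).
Proof. intros Hq Hs. split; [|split].
- split. apply pc_Meq. intros a X Y. cases2; pcr; unfold lc, madd, mscale; apply Cx_ext; simpl; ring.
- apply pc_CP; auto.
- intros X. unfold mtr. simpl csum. pcr. unfold lc. apply Cx_ext; simpl; replace (q 3%nat) with (1 - q 0%nat - q 1%nat - q 2%nat) by lra; ring.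
Qed.

Lemma choi_ext V W : (forall X, Meq 2 (V X) (W X)) -> Meq 4 (choi V) (choi W).
Proof. intros H I J HI HJ. unfold choi. apply H; apply Nat.Div0.div_lt_upper_bound; lia. Qed.

Lemma sq2 : / sqrt 2 * / sqrt 2 = / 2.
Proof. rewrite <- Rinv_mult. rewrite sqrt_sqrt; lra. Qed.
Lemma sq2' : / sqrt 2 * - / sqrt 2 = - / 2.
Proof. rewrite <- Ropp_mult_distr_r, sq2. reflexivity. Qed.
Lemma sq2'' : - / sqrt 2 * / sqrt 2 = - / 2.
Proof. rewrite <- Ropp_mult_distr_l, sq2. reflexivity. Qed.
Lemma sq2''' : - / sqrt 2 * - / sqrt 2 = / 2.
Proof. rewrite Rmult_opp_opp, sq2. reflexivity. Qed.

Lemma choi_pc H G : Meq 4 (choi (pauli_channel (pf H (2*G))))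
       (madd (mscale (RtoC (/2*(H+G))) (Pproj Phi_plus))
         (madd (mscale (RtoC (/2*(1-G))) (Pproj Phi_minus))
               (mscale (RtoC (1 - /2*(H+G) - /2*(1-G))) (PT_B (Pproj Psi_plus))))).
Proof. intros I J HI HJ. assert (Hs2 : sqrt 2 <> 0) by (pose proof (sqrt_lt_R0 2); lra).
destruct I as [|[|[|[|I]]]]; try lia; destruct J as [|[|[|[|J]]]]; try lia;
unfold choi; simpl (_ / 2)%nat; simpl (_ mod 2)%nat; pcr;
unfold PT_B, Pproj, Phi_plus, Phi_minus, Psi_plus, ket, eunit, lc, pf, madd, mscale; apply Cx_ext; simpl;
rewrite ?sq2, ?sq2', ?sq2'', ?sq2'''; field; exact Hs2. Qed.

Lemma decomp H G X : 1 + H <> 0 ->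
  Meq 2 (pauli_channel (pf H (2*G)) X)
   (madd (mscale (RtoC ((1+H)/2)) (pauli_channel (fun mu => match mu with O => (H+G)/(1+H) | 3%nat => (1-G)/(1+H) | _ => 0 end) X))
         (mscale (RtoC (1 - (1+H)/2)) (pauli_channel (fun mu => match mu with 1%nat => 1 | _ => 0 end) (transpose X)))).
Proof. intros. cases2; unfold madd, mscale; pcr; unfold lc, pf, transpose; apply Cx_ext; simpl; field; auto. Qed.


Lemma exp_le' x y : x <= y -> exp x <= exp y.
Proof. intros H; destruct (Rle_lt_or_eq_dec _ _ H). left; apply exp_increasing; auto. subst; lra. Qed.
Lemma ln_le0 x : 0 < x -> x <= 1 -> ln x <= 0.
Proof. intros H1 H2; destruct (Rle_lt_or_eq_dec _ _ H2). left; rewrite <- ln_1; apply ln_increasing; auto.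
subst; rewrite ln_1; lra. Qed.
Lemma cosh_pos x : 0 < cosh x.
Proof. unfold cosh. pose proof (exp_pos x); pose proof (exp_pos (-x)); lra. Qed.

Definition L1 alpha c t := exp (- (alpha * c * t)) * Rpower (cosh (c * t)) alpha.

Lemma L1_pos alpha c t : 0 < L1 alpha c t.
Proof. unfold L1, Rpower. apply Rmult_lt_0_compat; apply exp_pos. Qed.

Lemma Lambda_eq alpha c t : Lambda alpha c t = pauli_channel (pf (exp (- 2 * alpha * c * t)) (2 * L1 alpha c t)).
Proof. unfold Lambda. f_equal. apply functional_extensionality; intros mu.
assert (Hx : exp (- 2 * alpha * c * t) * exp (alpha * c * t) = exp (- (alpha*c*t))).
{ rewrite <- exp_plus. f_equal. ring. }
unfold L1. destruct mu as [|[|[|mu]]]; simpl; try reflexivity;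
[replace (exp (- 2 * alpha * c * t) * (1 + 2 * exp (alpha * c * t) * Rpower (cosh (c * t)) alpha))
  with (exp (- 2 * alpha * c * t) + 2 * (exp (- 2 * alpha * c * t) * exp (alpha * c * t)) * Rpower (cosh (c * t)) alpha) by ring
|replace (exp (- 2 * alpha * c * t) * (1 - 2 * exp (alpha * c * t) * Rpower (cosh (c * t)) alpha))
  with (exp (- 2 * alpha * c * t) - 2 * (exp (- 2 * alpha * c * t) * exp (alpha * c * t)) * Rpower (cosh (c * t)) alpha) by ring];
rewrite Hx; ring. Qed.

Lemma Meq_sym n A B : Meq n A B -> Meq n B A.
Proof. intros H i j ? ?; symmetry; auto. Qed.

Lemma H_eq alpha c t s : exp (- 2 * alpha * c * t) * / exp (- 2 * alpha * c * s) = Rpower (lam c (t - s)) (2 * alpha).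
Proof. unfold Rpower, lam. rewrite ln_exp. rewrite <- exp_Ropp, <- exp_plus. f_equal. ring. Qed.

Lemma G_eq alpha c t s : 2 * L1 alpha c t * (4 / (2 * L1 alpha c s)) / 2 = 2 * Rpower (Gam c t s) alpha.
Proof. pose proof (L1_pos alpha c s).
replace (2 * L1 alpha c t * (4 / (2 * L1 alpha c s)) / 2) with (2 * (L1 alpha c t * / L1 alpha c s)) by (field; lra).
f_equal. unfold L1, Gam, lam, Rpower. pose proof (cosh_pos (c*t)); pose proof (cosh_pos (c*s)).
rewrite ln_mult, ln_mult, ln_exp, ln_Rinv; auto; try apply exp_pos; try (apply Rinv_0_lt_compat; auto);
try (apply Rmult_lt_0_compat; auto; apply exp_pos).
rewrite Rinv_mult, <- !exp_Ropp, <- !exp_plus. f_equal. ring. Qed.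

Lemma G_bounds alpha c t s : 1 <= alpha -> 0 < c -> 0 <= s -> s <= t ->
  0 < Rpower (Gam c t s) alpha <= 1.
Proof. intros Ha Hc Hs Hst. unfold Rpower. split. apply exp_pos.
rewrite <- exp_0. apply exp_le'.
assert (Hg : 0 < Gam c t s /\ Gam c t s <= 1).
{ unfold Gam, lam. pose proof (cosh_pos (c*t)); pose proof (cosh_pos (c*s)).
  split. apply Rmult_lt_0_compat. apply Rmult_lt_0_compat; auto; apply exp_pos. apply Rinv_0_lt_compat; auto.
  apply (Rmult_le_reg_r (cosh (c*s))); auto. rewrite Rmult_assoc, Rinv_l by lra. rewrite Rmult_1_r, Rmult_1_l.
  unfold cosh. rewrite Rmult_div_assoc, Rmult_plus_distr_l, <- !exp_plus.
  replace (- c * (t - s) + c * t) with (c*s) by ring.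
  assert (Hq : - c * (t - s) + - (c * t) <= - (c*s)) by (assert (0 <= c*(t-s)) by (apply Rmult_le_pos; lra); lra). pose proof (exp_le' _ _ Hq). lra. }
destruct Hg. pose proof (ln_le0 _ H H0). nra. Qed.

Lemma H_bounds alpha c t s : 1 <= alpha -> 0 < c -> 0 <= s -> s <= t ->
  0 < Rpower (lam c (t - s)) (2 * alpha) <= 1.
Proof. intros. unfold Rpower, lam. rewrite ln_exp. split. apply exp_pos. rewrite <- exp_0. apply exp_le'. assert (0 <= c*(t-s)) by (apply Rmult_le_pos; lra). nra. Qed.


Theorem mainTheorem10 (alpha c : R) (Halpha : 1 <= alpha) (Hc : 0 < c) :
  (forall t, 0 <= t -> exists Linv, is_inverse (Lambda alpha c t) Linv) /\
  (forall (s t : R) (Linv : QMap), 0 <= s -> s <= t ->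
     is_inverse (Lambda alpha c s) Linv ->
     let V : QMap := fun X => Lambda alpha c t (Linv X) in
     let p1 := / 2 * (Rpower (lam c (t - s)) (2 * alpha) + Rpower (Gam c t s) alpha) in
     let p2 := / 2 * (1 - Rpower (Gam c t s) alpha) in
     Meq 4 (choi V)
       (madd (mscale (RtoC p1) (Pproj Phi_plus))
         (madd (mscale (RtoC p2) (Pproj Phi_minus))
               (mscale (RtoC (1 - p1 - p2)) (PT_B (Pproj Psi_plus))))) /\
     0 <= p1 /\ 0 <= p2 /\ p1 + p2 <= 1 /\
     exists p : R, 0 <= p <= 1 /\
       exists E1 E2 : QMap, CPTP E1 /\ CPTP E2 /\
         forall X : Mat,
           Meq 2 (V X) (madd (mscale (RtoC p) (E1 X))
                             (mscale (RtoC (1 - p)) (E2 (transpose X))))).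
Proof.
split.
- intros t _. eexists. rewrite Lambda_eq. apply pc_inv. apply Rgt_not_eq, exp_pos.
  pose proof (L1_pos alpha c t); lra.
- intros s t Linv Hs Hst HL V p1 p2.
  assert (HV : forall X, Meq 2 (V X) (pauli_channel (pf (Rpower (lam c (t - s)) (2 * alpha)) (2 * Rpower (Gam c t s) alpha)) X)).
  { intros X. unfold V.
    assert (Hn1 : exp (- 2 * alpha * c * s) <> 0) by (apply Rgt_not_eq, exp_pos).
    assert (Hn2 : 2 * L1 alpha c s <> 0) by (pose proof (L1_pos alpha c s); lra).
    destruct (pc_inv _ _ Hn1 Hn2) as [_ HK].
    rewrite Lambda_eq in HL. destruct HL as [HL1 _].
    assert (HLK : Meq 2 (Linv X) (pauli_channel (pf (/ exp (- 2 * alpha * c * s)) (4 / (2 * L1 alpha c s))) X)).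
    { eapply Meq_trans. apply Meq_sym, HK. apply pc_Meq, HL1. }
    rewrite Lambda_eq. eapply Meq_trans. apply pc_Meq, HLK.
    eapply Meq_trans. apply pc_comp. rewrite H_eq, G_eq. intros i j ? ?; reflexivity. }
  pose proof (G_bounds alpha c t s Halpha Hc Hs Hst) as HG.
  pose proof (H_bounds alpha c t s Halpha Hc Hs Hst) as HH.
  unfold p1, p2.
  set (H := Rpower (lam c (t - s)) (2 * alpha)) in *.
  set (G := Rpower (Gam c t s) alpha) in *.
  split; [|split; [|split; [|split]]].
  + eapply Meq_trans. apply choi_ext, HV. apply choi_pc.
  + lra.
  + lra.
  + lra.
  + exists ((1 + H) / 2). split. lra.
    eexists; eexists; split; [|split].
    3: { intros X. eapply Meq_trans. apply HV. apply decomp. lra. }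
    * apply pc_CPTP.
      -- intros mu Hmu. destruct mu as [|[|[|[|mu]]]]; try lra; try lia;
         unfold Rdiv; apply Rmult_le_pos; try lra; left; apply Rinv_0_lt_compat; lra.
      -- field. lra.
    * apply pc_CPTP.
      -- intros mu Hmu. destruct mu as [|[|[|[|mu]]]]; lra.
      -- lra.
Qed.
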